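(* Let $P$ be a finite semipure poset of length $n$ with a unique minimum element $\hat 0$, $t\ge1$, $\lambda_P:\mathrm{Cov}(\hat P)\to L_P$ an EL-labeling, $\lambda$ the induced EL-labeling of $\widehat{P*T_{t,n}}$ restricted to $(P*T_{t,n})^+=[(\hat 0,\hat 0_T),\hat 1]$, and $m\in\mathbb N$. Then the number of ascent free maximal chains of $(P*T_{t,n})^+$ of length $m+1$ equals $$\sum_{\substack{w\in\mathrm{NDA}_{m+1}(L_P)\\ w_m\not\le w_{m+1}}} c(w)\,t^{\mathrm{asc}(w)}(1+t)^{m-2\,\mathrm{asc}(w)}+\sum_{\substack{w\in\mathrm{NDA}_{m+1}(L_P)\\ w_m\le w_{m+1}}} c(w)\,t^{\mathrm{asc}(w)}(1+t)^{m+1-2\,\mathrm{asc}(w)},$$ where $c(w)$ is the number of maximal chains of $P^+$ (the interval $[\hat 0,\hat 1_P]$ of $\hat P$) of length $m+1$ whose label sequence under $\lambda_P$ is $w$.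
   Context: Rees product $P*Q$ of semipure posets (rank $r_P(x)$ = common length of maximal chains of $P_{\le x}$): the set $\{(p,q): r_P(p)\ge r_Q(q)\}$ with $(p_1,q_1)\le(p_2,q_2)$ iff $p_1\le p_2$, $q_1\le q_2$, $r_P(p_2)-r_P(p_1)\ge r_Q(q_2)-r_Q(q_1)$. $T_{t,n}$: sequences over $\{1,\dots,t\}$ of length $\le n$ ordered by prefix, minimum $\hat 0_T$, rank = length. $\hat Q$: $Q$ with a new minimum and new maximum adjoined (even if $Q$ already has them); for $\hat P$ these are $\hat 0_P,\hat 1_P$. $Q^+$: $Q$ with a new maximum adjoined. An edge labeling $\lambda:\mathrm{Cov}(Q)\to L$ of a bounded poset is an EL-labeling if each interval $[x,y]$ has a unique maximal chain with weakly increasing labels and its label sequence lexicographically precedes those of all other maximal chains of $[x,y]$. The induced labeling $\lambda$ of $\widehat{P*T_{t,n}}$ takes values in $L_P\times\{0<1\}$ (product order): the minimum is identified with $(\hat 0_P,\hat 0_T)$; for a cover $(x,k)\lessdot(y,l)$ with $(y,l)\ne\hat 1$, $\lambda=(\lambda_P(x,y),1)$ if $k<l$ and $(\lambda_P(x,y),0)$ if $k=l$; for $(x,k)\lessdot\hat 1$, $\lambda=(\lambda_P(x,\hat 1_P),0)$. A maximal chain is ascent free if no two consecutive labels $a,b$ satisfy $a\le b$. For a word $w$ of length $N$ over a poset $A$: $i\in[N-1]$ is an ascent if $w_i\le w_{i+1}$; $\mathrm{asc}(w)$ counts ascents; a double ascent is $i\in[N-2]$ with $w_i\le w_{i+1}\le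 w_{i+2}$; $\mathrm{NDA}_N(A)$ is the set of length-$N$ words over $A$ without double ascents. *)

(* Defs.v *)
From HB Require Import structures.
From mathcomp Require Import all_boot all_order.
Set Implicit Arguments. Unset Strict Implicit. Unset Printing Implicit Defensive.
Import Order.Theory.
Local Open Scope order_scope.

Section Generic.
Variables (X : finType) (A : pred X) (le : rel X).

Definition rlt (x y : X) := (x != y) && le x y.

Definition rcover (x y : X) : bool :=
  [&& x \in A, y \in A, rlt x y &
      [forall z, (z \in A) ==> ~~ (rlt x z && rlt z y)]].

(* maximal chains a = x_0 <. x_1 <. ... <. x_k = b of the interval [a,b],
   of length k, recorded by the tuple (x_1, ..., x_k) *)
Definition mchains (a b : X) (k : nat) : {set k.-tuple X} :=
  [set c : k.-tuple X | (a \in A) && path rcover a c && (last a c == b)].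

End Generic.

Definition labseq (X L : Type) (lam : X -> X -> L) (a : X) (c : seq X) : seq L :=
  pairmap lam a c.

Section Words.
Variables (dL : Order.disp_t) (L : porderType dL).

Definition lexlt (s t : seq L) : Prop :=
  (exists u x y s' t', [/\ s = u ++ x :: s', t = u ++ y :: t' & x < y])
  \/ (exists y t', t = s ++ y :: t').

Definition asc (w : seq L) : nat :=
  if w is x :: s then count id (pairmap (fun a b => a <= b) x s) else 0.

Fixpoint no_dasc (w : seq L) : bool :=
  match w with
  | x :: ((y :: z :: _) as s) => ~~ ((x <= y) && (y <= z)) && no_dasc s
  | _ => true
  end.

Definition NDA (N : nat) (w : seq L) : bool := (size w == N) && no_dasc w.

(* w_m <= w_(m+1) for a word of length m+1 (1-indexed), i.e. the last two
   letters form an ascent; false for words of length < 2 *)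
Definition last_asc (w : seq L) : bool :=
  if rev w is b :: a :: _ then a <= b else false.

End Words.

Definition EL_labeling (X : finType) (A : pred X) (le : rel X)
    (dL : Order.disp_t) (L : porderType dL) (lam : X -> X -> L) : Prop :=
  forall x y, x \in A -> y \in A -> le x y ->
    exists k, exists c : k.-tuple X,
      [/\ c \in mchains A le x y k,
          sorted (fun a b => a <= b) (labseq lam x c),
          (forall k' (c' : k'.-tuple X), c' \in mchains A le x y k' ->
              sorted (fun a b => a <= b) (labseq lam x c') ->
              (c' : seq X) = c) &
          (forall k' (c' : k'.-tuple X), c' \in mchains A le x y k' ->
              (c' : seq X) != c -> lexlt (labseq lam x c) (labseq lam x c'))].

Section PosetP.
Variables (d : Order.disp_t) (P : finPOrderType d).

Definition Pmchains := mchains (@predT P) (fun x y : P => x <= y).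

Definition minimal (a : P) : bool := [forall b : P, (b <= a) ==> (b == a)].

Definition semipure : Prop :=
  forall (x a1 a2 : P) k1 k2 (c1 : k1.-tuple P) (c2 : k2.-tuple P),
    minimal a1 -> minimal a2 ->
    c1 \in Pmchains a1 x k1 -> c2 \in Pmchains a2 x k2 -> k1 = k2.

Definition rank (x : P) : nat :=
  \max_(ak : P * 'I_#|P| | minimal ak.1 && (Pmchains ak.1 x ak.2 != set0))
     (ak.2 : nat).

Definition plength : nat :=
  \max_(abk : P * P * 'I_#|P| | Pmchains abk.1.1 abk.1.2 abk.2 != set0)
     (abk.2 : nat).

End PosetP.

Inductive hat (T : Type) := HBot | HElt of T | HTop.
Arguments HBot {T}. Arguments HTop {T}.

Definition hat_to (T : Type) (x : hat T) : option (option T) :=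
  match x with HBot => None | HElt p => Some (Some p) | HTop => Some None end.
Definition hat_of (T : Type) (o : option (option T)) : hat T :=
  match o with None => HBot | Some (Some p) => HElt p | Some None => HTop end.
Lemma hat_toK (T : Type) : cancel (@hat_to T) (@hat_of T).
Proof. by case. Qed.

HB.instance Definition _ (T : finType) := Finite.copy (hat T) (can_type (@hat_toK T)).

Definition hle (d : Order.disp_t) (P : porderType d) (x y : hat P) : bool :=
  match x, y with
  | HBot, _ => true
  | _, HTop => true
  | HElt p, HElt q => p <= q
  | _, _ => false
  end.

(* T_{t,n}: words over {0,...,t-1} of length <= n (prefix order)       *)
Definition Tword (t n : nat) := {k : 'I_n.+1 & k.-tuple 'I_t}.
Definition tw (t n : nat) (q : Tword t n) : seq 'I_t := tagged q.
Definition Tempty (t n : nat) : Tword t n :=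
  @Tagged 'I_n.+1 ord0 (fun k : 'I_n.+1 => k.-tuple 'I_t) [tuple].

(* (P * T_{t,n})^+ : the Rees product with a new maximum (None)        *)
Section Rees.
Variables (d : Order.disp_t) (P : finPOrderType d) (t n : nat).

Definition RP := option (P * Tword t n).

Definition Rcarrier : pred RP := fun u =>
  if u is Some (p, q) then size (tw q) <= rank p else true.

Definition Rle (u v : RP) : bool :=
  match u, v with
  | _, None => true
  | None, Some _ => false
  | Some (p1, q1), Some (p2, q2) =>
      [&& p1 <= p2, prefix (tw q1) (tw q2) &
          rank p1 + size (tw q2) <= rank p2 + size (tw q1)]
  end.

Definition ltT (q1 q2 : Tword t n) : bool :=
  prefix (tw q1) (tw q2) && (tw q1 != tw q2).

(* the induced labeling of \hat{P * T_{t,n}}, on covers of (P*T_{t,n})^+ ;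
   labels in L_P x {0 < 1}, with {0<1} = {false < true} *)
Definition Rlab (dL : Order.disp_t) (L : porderType dL)
    (lamP : hat P -> hat P -> L) (u v : RP) : L * bool :=
  match u, v with
  | Some (x, k), Some (y, l) => (lamP (HElt x) (HElt y), ltT k l)
  | Some (x, k), None => (lamP (HElt x) HTop, false)
  | _, _ => (lamP HTop HTop, false) (* not a cover of (P*T)^+ ; irrelevant *)
  end.
End Rees.

Definition lelab (dL : Order.disp_t) (L : porderType dL) (a b : L * bool) : bool :=
  (a.1 <= b.1) && (a.2 ==> b.2).

Definition ascent_free (dL : Order.disp_t) (L : porderType dL) (w : seq (L * bool)) : bool :=
  if w is x :: s then ~~ has id (pairmap (@lelab dL L) x s) else true.

(* Main.v *)
Require Import Defs.
From mathcomp Require Import all_boot all_order zify.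
Import Order.Theory.
Set Implicit Arguments. Unset Strict Implicit. Unset Printing Implicit Defensive.


Section Rank.
Variables (d : Order.disp_t) (P : finPOrderType d) (z0 : P).
Hypothesis z0min : forall x : P, (z0 <= x)%O.
Hypothesis sp : semipure P.

Definition cov := rcover (@predT P) (fun x y : P => (x <= y)%O).

Lemma rltE (x y : P) : rlt (fun x y : P => (x <= y)%O) x y = (x < y)%O.
Proof. by rewrite /rlt lt_def eq_sym. Qed.

Lemma covE x y : cov x y = (x < y)%O && [forall z, ~~ ((x < z)%O && (z < y)%O)].
Proof.
rewrite /cov /rcover !inE /= rltE; congr (_ && _).
by apply: eq_forallb => z; rewrite !rltE.
Qed.

Lemma cov_lt x y : cov x y -> (x < y)%O.
Proof. by rewrite covE => /andP[]. Qed.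

Lemma path_uniq a (c : seq P) : path cov a c -> uniq (a :: c).
Proof.
move=> pc; apply: (@sorted_uniq _ (fun x y : P => (x < y)%O)).
- by move=> ???; apply: lt_trans.
- by move=> ?; rewrite ltxx.
by apply: sub_path pc => x y /cov_lt.
Qed.

Lemma PmchainsE a b k (c : k.-tuple P) :
  (c \in Pmchains a b k) = path cov a c && (last a c == b).
Proof. by rewrite inE. Qed.

Lemma chain_size a b k (c : k.-tuple P) : c \in Pmchains a b k -> k < #|P|.
Proof.
rewrite PmchainsE => /andP[/path_uniq u _].
have := max_card (mem (a :: (c : seq P))).
by rewrite (card_uniqP u) /= size_tuple.
Qed.

Lemma minimalE a : minimal a -> a = z0.
Proof.
by move=> /forallP /(_ z0); rewrite z0min /= => /eqP.
Qed.

Lemma minimal_z0 : minimal z0.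
Proof.
by apply/forallP => b; apply/implyP => bz; rewrite eq_le bz z0min.
Qed.

Lemma rankE y k (c : k.-tuple P) : c \in Pmchains z0 y k -> rank y = k.
Proof.
move=> cin; apply/eqP; rewrite eqn_leq; apply/andP; split.
  apply/bigmax_leqP => [[a k']] /= /andP[/minimalE -> /set0Pn[c' c'in]].
  by rewrite (sp minimal_z0 minimal_z0 c'in cin).
have kP := chain_size cin.
apply: (@leq_bigmax_cond _ _ (fun ak : P * 'I_#|P| => (ak.2 : nat)) (z0, Ordinal kP)) => /=.
by rewrite minimal_z0 /=; apply/set0Pn; exists c.
Qed.

Lemma cover_exists x y : (x < y)%O -> exists p, cov x p && (p <= y)%O.
Proof.
move=> xy.
pose S := fun z => (x < z)%O && (z <= y)%O.
have Sy : S y by rewrite /S xy lexx.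
case: (arg_minnP (fun z => #|[set w | (w < z)%O]|) Sy) => p /andP[xp py] pmin.
exists p; rewrite py andbT covE xp /=.
apply/forallP => z; apply/negP => /andP[xz zp].
have := pmin z; rewrite /S xz (le_trans (ltW zp) py) => /(_ isT).
apply/negP; rewrite -ltnNge; apply: proper_card; apply/properP; split.
  by apply/subsetP => w; rewrite !inE => /lt_trans; apply.
by exists z; rewrite !inE ?zp ?ltxx.
Qed.

Lemma chain_exists x y : (x <= y)%O -> exists k (c : k.-tuple P), c \in Pmchains x y k.
Proof.
move=> xy0; have [N h0] : exists N, #|[set z | (x < z)%O && (z <= y)%O]| <= N by eexists.
elim: N x h0 xy0 => [|N IH] x.
  move=> h xy; case: (eqVneq x y) => [->|nxy].
    by exists 0, [tuple]; rewrite PmchainsE /=.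
  move: h; rewrite leqn0 => /eqP/cards0_eq/setP/(_ y); rewrite !inE lexx andbT.
  by rewrite lt_def eq_sym nxy xy.
move=> h xy; case: (eqVneq x y) => [->|nxy].
  by exists 0, [tuple]; rewrite PmchainsE /=.
have xy' : (x < y)%O by rewrite lt_def eq_sym nxy xy.
case: (cover_exists xy') => p /andP[xp py].
have [|k [c cin]] := IH p _ py.
  rewrite -ltnS; apply: leq_trans h; apply: proper_card; apply/properP; split.
    apply/subsetP => w; rewrite !inE => /andP[pw ->]; rewrite andbT.
    by apply: lt_trans pw; apply: cov_lt.
  by exists p; rewrite !inE ?py ?ltxx ?(cov_lt xp).
exists k.+1, [tuple of p :: c]; move: cin; rewrite !PmchainsE /=.
by rewrite xp.
Qed.

Lemma rank_z0 : rank z0 = 0.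
Proof. by apply: (@rankE z0 0 [tuple]); rewrite PmchainsE /= eqxx. Qed.

Lemma rank_chain (x : P) : exists c : (rank x).-tuple P, c \in Pmchains z0 x (rank x).
Proof.
have [k [c cin]] := chain_exists (z0min x).
by rewrite (rankE cin); exists c.
Qed.

Lemma rank_cover x y : cov x y -> rank y = (rank x).+1.
Proof.
move=> xy; have [c cin] := rank_chain x.
apply: (@rankE y (rank x).+1 [tuple of rcons c y]).
move: cin; rewrite !PmchainsE /= rcons_path last_rcons eqxx andbT.
by case/andP=> -> /eqP ->.
Qed.

Lemma rank_mono (x y : P) : (x <= y)%O -> rank x <= rank y.
Proof.
move=> xy; have [c cin] := rank_chain x; have [k [c' c'in]] := chain_exists xy.
have -> : rank y = rank x + k.
  apply: (@rankE y (rank x + k) [tuple of c ++ c']).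
  move: cin c'in; rewrite !PmchainsE /= cat_path last_cat.
  by case/andP=> -> /eqP -> /andP[-> ->].
exact: leq_addr.
Qed.

Lemma rank_plength (x : P) : rank x <= plength P.
Proof.
have [c cin] := rank_chain x.
have kP := chain_size cin.
apply: (@leq_bigmax_cond _ _ (fun abk : P * P * 'I_#|P| => (abk.2 : nat)) (z0, x, Ordinal kP)).
by apply/set0Pn; exists c.
Qed.

Lemma rank_lt (x y : P) : (x < y)%O -> rank x < rank y.
Proof.
move=> /cover_exists [p /andP[xp py]].
by apply: leq_trans (rank_mono py); rewrite (rank_cover xp).
Qed.

End Rank.


Section TW.
Variables (t n : nat).

Lemma tw_inj : injective (@tw t n).
Proof.
move=> [k1 s1] [k2 s2]; rewrite /tw /= => E.
have ek : k1 = k2 by apply: val_inj; rewrite /= -(size_tuple s1) -(size_tuple s2) E.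
subst k2; by rewrite (val_inj E).
Qed.

Definition mkT (s : seq 'I_t) : Tword t n :=
  match (size s < n.+1) =P true with
  | ReflectT H => @Tagged _ (Ordinal H) (fun k : 'I_n.+1 => k.-tuple 'I_t) (in_tuple s)
  | ReflectF _ => Tempty t n
  end.

Lemma tw_mkT s : size s <= n -> tw (mkT s) = s.
Proof. by rewrite /mkT; case: eqP => // H; rewrite ltnS H. Qed.

Lemma size_tw (q : Tword t n) : size (tw q) <= n.
Proof. by case: q => k s; rewrite /tw /= size_tuple -ltnS. Qed.

Lemma mkT_tw q : mkT (tw q) = q.
Proof. by apply: tw_inj; rewrite tw_mkT // size_tw. Qed.

Lemma mkT_nil : mkT [::] = Tempty t n.
Proof. by apply: tw_inj; rewrite tw_mkT. Qed.

End TW.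

Lemma prefix_size_eq (T : eqType) (s u : seq T) : prefix s u -> size u <= size s -> u = s.
Proof.
rewrite prefixE => /eqP E le; rewrite -E take_oversize //.
Qed.

Section Rees2.
Variables (d : Order.disp_t) (P : finPOrderType d) (z0 : P).
Hypothesis z0min : forall x : P, (z0 <= x)%O.
Hypothesis sp : semipure P.
Variables (t n : nat).

Notation Rcov := (rcover (@Rcarrier d P t n) (@Rle d P t n)).
Notation cov := (@cov d P).

Lemma RcovSS p1 q1 p2 q2 : Rcov (Some (p1, q1)) (Some (p2, q2)) =
  [&& size (tw q1) <= rank p1, size (tw q2) <= rank p2, cov p1 p2,
      prefix (tw q1) (tw q2) & size (tw q2) <= (size (tw q1)).+1].
Proof.
rewrite /rcover /rlt /= !unfold_in /= !leEnat.
apply/idP/idP.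
- case/and4P=> c1 c2 /andP[neq /and3P[le12 pre rk]] /forallP nz.
  rewrite c1 c2 pre /=.
  have p12 : p1 != p2.
    apply: contraNneq neq => E; subst p2; rewrite leq_add2l in rk.
    by rewrite (tw_inj (prefix_size_eq pre rk)).
  have lt12 : (p1 < p2)%O by rewrite lt_def eq_sym p12.
  have [p /andP[p1p pp2]] := cover_exists lt12.
  have rkp := rank_cover z0min sp p1p.
  have sq := size_prefix pre.
  case: (eqVneq p p2) => [E|pnp2].
    subst p; rewrite p1p /=; rewrite rkp in rk; lia.
  exfalso.
  have pp1 : p != p1 by rewrite eq_sym (lt_eqF (cov_lt p1p)).
  have lp1p : (p1 <= p)%O by apply: ltW; apply: cov_lt.
  have rkm := rank_mono z0min sp pp2.
  suff HH : exists q' : Tword t n, [/\ size (tw q') <= rank p,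
      prefix (tw q1) (tw q'), prefix (tw q') (tw q2),
      rank p1 + size (tw q') <= rank p + size (tw q1) &
      rank p + size (tw q2) <= rank p2 + size (tw q')].
    destruct HH as [q' [Hc Hp1 Hp2 Hr1 Hr2]].
    have H1 : Some (p1, q1) != Some (p, q').
      by apply/eqP => -[] /eqP; rewrite eq_sym (negbTE pp1).
    have H2 : Some (p, q') != Some (p2, q2).
      by apply/eqP => -[] /eqP; rewrite (negbTE pnp2).
    move: (nz (Some (p, q'))); rewrite !unfold_in /= !leEnat H1 H2 Hc /=.
    by rewrite lp1p pp2 Hp1 Hp2 Hr1 Hr2.
  case: (eqVneq (tw q1) (tw q2)) => [E12|N12].
    exists q1; rewrite prefix_refl E12 prefix_refl.
    have rk1 := rank_mono z0min sp lp1p.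
    split=> //; first by rewrite -E12; apply: leq_trans c1 rk1.
      by rewrite leq_add2r.
    by rewrite leq_add2r.
  have lt1 : size (tw q1) < size (tw q2).
    rewrite ltn_neqAle sq andbT; apply: contra_neq N12 => Es.
    by apply/esym/prefix_size_eq => //; rewrite Es.
  have sz' : size (take (size (tw q1)).+1 (tw q2)) = (size (tw q1)).+1.
    by rewrite size_takel.
  have twq' : tw (mkT n (take (size (tw q1)).+1 (tw q2))) = take (size (tw q1)).+1 (tw q2).
    by rewrite tw_mkT // sz'; apply: leq_trans lt1 (size_tw _).
  exists (mkT n (take (size (tw q1)).+1 (tw q2))); rewrite twq' sz'.
  split.
  - by rewrite rkp.
  - by move: pre; rewrite !prefixE -take_min (minn_idPl (leqnSn _)).
  - exact: prefix_take.
  - by rewrite rkp; lia.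
  - by rewrite rkp; lia.
- case/and5P=> c1 c2 c12 pre sz.
  have rk := rank_cover z0min sp c12.
  have lt12 := cov_lt c12.
  rewrite c1 c2 pre /= (ltW lt12) rk /=.
  have -> : Some (p1, q1) != Some (p2, q2).
    by apply/eqP => -[] E; rewrite E ltxx in lt12.
  have -> : rank p1 + size (tw q2) <= (rank p1).+1 + size (tw q1) by lia.
  rewrite /=.
  apply/forallP => -[[p q]|] //=.
  apply/implyP => _; apply/negP => /and5P[/and4P[n1 l1 pr1 r1] n2 l2 pr2 r2].
  move: r1 r2; rewrite ?leEnat => r1 r2.
  move: c12; rewrite covE => /andP[_ /forallP/(_ p)].
  case: (eqVneq p p1) => [E|np1].
    subst p; rewrite leq_add2l in r1.
    by rewrite (tw_inj (prefix_size_eq pr1 r1)) eqxx in n1.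
  case: (eqVneq p p2) => [E|np2].
    subst p; rewrite leq_add2l in r2.
    by rewrite (tw_inj (prefix_size_eq pr2 r2)) eqxx in n2.
  by rewrite !lt_def np1 l1 l2 /= eq_sym np2.
Qed.
End Rees2.


Section Rees3.
Variables (d : Order.disp_t) (P : finPOrderType d) (z0 : P).
Hypothesis z0min : forall x : P, (z0 <= x)%O.
Hypothesis sp : semipure P.
Variables (t n : nat).

Notation Rcov := (rcover (@Rcarrier d P t n) (@Rle d P t n)).

Definition maxl (p : P) := [forall y, ~~ (p < y)%O].

Lemma RcovSN p q : Rcov (Some (p, q)) None = (size (tw q) <= rank p) && maxl p.
Proof.
rewrite /rcover /rlt /= !unfold_in /= leEnat.
apply/idP/idP.
- case/andP=> c1 /forallP nz; rewrite c1 /=.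
  apply/forallP => y; apply/negP => py.
  have [p' /andP[pp' _]] := cover_exists py.
  have lt := cov_lt pp'.
  have ne : Some (p, q) != Some (p', q).
    by apply/eqP => -[] E; rewrite E ltxx in lt.
  have := nz (Some (p', q)); rewrite unfold_in /= !leEnat.
  rewrite (leq_trans c1 (rank_mono z0min sp (ltW lt))) (ltW lt) prefix_refl ne /=.
  by rewrite leq_add2r (rank_mono z0min sp (ltW lt)).
- case/andP=> c1 mx; rewrite c1 /=.
  apply/forallP => -[[p' q']|] //=.
  rewrite andbT.
  apply/implyP => _; apply/negP => /and4P[ne l pr r].
  have E : p' = p.
    apply/eqP; move/forallP: mx => /(_ p'); rewrite lt_def l andbT negbK.
    by rewrite eq_sym.
  subst p'; rewrite leq_add2l in r.
  by rewrite (tw_inj (prefix_size_eq pr r)) eqxx in ne.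
Qed.

Lemma RcovN v : Rcov None v = false.
Proof.
rewrite /rcover /rlt; case: v => [[p q]|] /=; first by rewrite !andbF.
by [].
Qed.

Notation hcov := (rcover (@predT (hat P)) (@hle d P)).

Lemma HElt_eqE (p q : P) : (HElt p == HElt q) = (p == q).
Proof. by apply/eqP/eqP => [[]|->]. Qed.

Lemma hcovEE p q : hcov (HElt p) (HElt q) = cov p q.
Proof.
rewrite covE /rcover /rlt /=.
rewrite HElt_eqE.
rewrite [(p < q)%O]lt_def (eq_sym q p); congr (_ && _).
apply/idP/idP => /forallP H; apply/forallP.
- move=> z; have := H (HElt z); rewrite /= !lt_def.
  rewrite !HElt_eqE.
  by rewrite (eq_sym z p) (eq_sym q z).
- move=> [|z|] /=; rewrite ?andbF ?andbT //.
  have := H z; rewrite !lt_def.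
  rewrite !HElt_eqE.
  by rewrite (eq_sym z p) (eq_sym q z).
Qed.

Lemma hcovET p : hcov (HElt p) HTop = maxl p.
Proof.
rewrite /rcover /rlt /= /maxl.
apply/idP/idP => /forallP H; apply/forallP.
- move=> z; have := H (HElt z); rewrite /= !andbT HElt_eqE lt_def eq_sym.
  by [].
- move=> [|z|] /=; rewrite ?andbF ?andbT ?eqxx //.
  by have := H z; rewrite lt_def HElt_eqE eq_sym.
Qed.

Lemma hcovT y : hcov HTop y = false.
Proof. by rewrite /rcover /rlt; case: y => [|z|] //=; rewrite eqxx. Qed.

Lemma hcovB x : hcov x HBot = false.
Proof. by rewrite /rcover /rlt; case: x => [|z|] //=; rewrite eqxx. Qed.

End Rees3.


Section Comb.
Variable t : nat.

Definition dd (a b : bool) : nat :=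
  if a && b then 0 else if b then t else if a then 1 else t.+1.

Fixpoint prodd (a : bool) (e : seq bool) : nat :=
  if e is b :: e' then dd a b * prodd b e' else 1.

Fixpoint ff (a : bool) (e : seq bool) : nat :=
  if e is b :: e' then (~~ a && ~~ b) + ff b e' else 0.

Fixpoint nocons (e : seq bool) : bool :=
  match e with
  | x :: ((y :: _) as s) => ~~ (x && y) && nocons s
  | _ => true
  end.

Lemma prodd_closed a e :
  prodd a e = if nocons (a :: e) then t ^ count id e * (1 + t) ^ ff a e else 0.
Proof.
elim: e a => [|b e IH] a; first by rewrite /= muln1.
have E : nocons [:: a, b & e] = ~~ (a && b) && nocons (b :: e) by [].
rewrite (_ : prodd a (b :: e) = dd a b * prodd b e) // IH E.
move: (nocons (b :: e)) => c.
clear E; rewrite /dd; case: a; case: b; case: c => //=; rewrite ?muln0 ?mul1n ?add0n //.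
- by rewrite expnS mulnA.
- by rewrite add1n expnS mulnCA.
Qed.

Lemma ff_count a e : nocons (a :: e) ->
  ff a e + a + count id e = size e - count id e + last a e.
Proof.
elim: e a => [|b e IH] a; first by move=> _ /=; rewrite subnn; case: a.
rewrite (_ : nocons [:: a, b & e] = ~~ (a && b) && nocons (b :: e)) // => /andP[nab nc].
move: (IH b nc) (count_size id e) nab; clear IH nc; rewrite /=.
by case: a; case: b => //= *; lia.
Qed.

Lemma prodd_big a e :
  \prod_(j < size e) dd (nth a (a :: e) j) (nth false e j) = prodd a e.
Proof.
elim: e a => [|b e IH] a /=; first by rewrite big_ord0.
rewrite big_ord_recl /= -IH; congr (_ * _); apply: eq_bigr => j _.
by rewrite add0n (set_nth_default b a) //= ltnS ltnW.
Qed.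

End Comb.

Section Words2.
Variables (dL : Order.disp_t) (L : porderType dL).

Definition lep := (fun a b : L => (a <= b)%O).

Lemma no_dasc_nocons x s : no_dasc (x :: s) = nocons (pairmap lep x s).
Proof.
elim: s x => [|y s IH] x; first by [].
case: s IH => [|z s] IH; first by [].
rewrite (_ : no_dasc [:: x, y, z & s] = ~~ ((x <= y)%O && (y <= z)%O) && no_dasc [:: y, z & s]) //.
by rewrite IH.
Qed.

Lemma last_asc_pair x s : last_asc (x :: s) = last false (pairmap lep x s).
Proof.
elim: s x => [|y s IH] x //.
case: s IH => [|z s] IH.
  by rewrite /last_asc /= /rev /=.
have -> : last_asc [:: x, y, z & s] = last_asc [:: y, z & s].
  have : 1 < size (rev [:: y, z & s]) by rewrite size_rev.
  rewrite /last_asc (rev_cons x [:: y, z & s]).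
  by case: (rev [:: y, z & s]) => [|b [|a r]].
by rewrite IH.
Qed.

Lemma asc_pair x s : asc (x :: s) = count id (pairmap lep x s).
Proof. by []. Qed.

End Words2.

Section G.
Variables (dL : Order.disp_t) (L : porderType dL) (t m : nat).

Definition Gw (w : seq L) : nat :=
  if NDA m.+1 w then t ^ asc w * (1 + t) ^ (if last_asc w then m.+1 - 2 * asc w else m - 2 * asc w)
  else 0.

Lemma prodd_Gw x (s : seq L) : size s = m -> prodd t false (pairmap (@lep _ L) x s) = Gw (x :: s).
Proof.
move=> sz; rewrite prodd_closed /Gw /NDA no_dasc_nocons last_asc_pair asc_pair.
rewrite [size _]/= sz eqxx andTb.
set e := pairmap _ x s.
have se : size e = m by rewrite size_pairmap.
have -> : nocons (false :: e) = nocons e by case: (e).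
case nc: (nocons e) => //.
have := ff_count (a:=false) (e:=e).
rewrite (_ : nocons (false :: e) = nocons e); last by case: (e).
rewrite nc se addn0 => /(_ isT).
have := count_size id e; rewrite se.
by case: (last false e) => /= H1 H2; congr (_ * _ ^ _); lia.
Qed.

End G.

Lemma af_equiv k (e b : nat -> bool) : b k = false ->
  (forall i, i < k -> ~~ (e i && (b i ==> b i.+1))) <->
  (forall j, j < k -> (e j ==> b j) && ((0 < j) && e j.-1 ==> ~~ b j)).
Proof.
move=> bk; split=> H.
- move=> j jk; apply/andP; split.
    by have := H j jk; case: (e j) => //=; case: (b j).
  case: j jk => [|j] //= jk; apply/implyP => ej.
  by have := H j (ltnW jk); rewrite ej /=; case: (b j.+1); rewrite ?implybT.
- move=> i ik; apply/negP => /andP[ei bi].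
  have := H i ik; rewrite ei /= => /andP[bi' _]; rewrite bi' /= in bi.
  case: (ltngtP i.+1 k) ik => // [lt|eq] _.
    by have := H i.+1 lt; rewrite /= ei bi implybT.
  by rewrite eq bk in bi.
Qed.

Lemma card_D t (a b : bool) :
  #|[pred o : option 'I_t | (b ==> isSome o) && (a ==> ~~ isSome o)]| = dd t a b.
Proof.
have cN : #|[pred o : option 'I_t | ~~ isSome o]| = 1.
  by rewrite -(card1 (None : option 'I_t)); apply: eq_card => -[].
have cS : #|[pred o : option 'I_t | isSome o]| = t.
  have := cardC [pred o : option 'I_t | isSome o]; rewrite card_option card_ord.
  have -> : #|[predC [pred o : option 'I_t | isSome o]]| = 1 by rewrite -cN; apply: eq_card => -[].
  by rewrite addn1 => -[].
rewrite /dd; case: a; case: b => /=.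
- by apply: eq_card0 => -[].
- by rewrite -[in RHS]cN; apply: eq_card => -[].
- by rewrite -[in RHS]cS; apply: eq_card => -[].
- have := card_option 'I_t; rewrite card_ord => <-.
  by apply: eq_card => -[].
Qed.

Section AF.
Variables (dL : Order.disp_t) (L : porderType dL).

Lemma AFP (l : seq (L * bool)) x :
  reflect (forall i, i < (size l).-1 -> ~~ lelab (nth x l i) (nth x l i.+1)) (ascent_free l).
Proof.
case: l => [|y l] /=; first by constructor.
apply: (iffP negP) => H.
- move=> i il; apply/negP => Hi; apply: H; apply/(has_nthP false).
  by exists i; rewrite ?size_pairmap // (nth_pairmap x).
- case/(has_nthP false) => i; rewrite size_pairmap => il.
  by rewrite (nth_pairmap x) //; apply/negP; apply: H.
Qed.

End AF.



Section Chains.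
Variables (d : Order.disp_t) (P : finPOrderType d) (z0 : P).
Hypothesis z0min : forall x : P, (z0 <= x)%O.
Hypothesis sp : semipure P.
Variables (t n m : nat).
Hypothesis Hn : plength P = n.

Notation RPt := (RP P t n).
Notation Rcov := (rcover (@Rcarrier d P t n) (@Rle d P t n)).
Notation hcov := (rcover (@predT (hat P)) (@hle d P)).
Definition R0 : RPt := Some (z0, Tempty t n).
Definition Pch := mchains (@predT (hat P)) (@hle d P) (HElt z0) HTop m.+1.
Definition PTch := mchains (@Rcarrier d P t n) (@Rle d P t n) R0 None m.+1.

Definition unH (x : hat P) : P := if x is HElt p then p else z0.
Definition Hs (pc : seq (hat P)) j := nth (HElt z0) (HElt z0 :: pc) j.
Definition pp pc j := unH (Hs pc j).

Lemma Pch_path (pc : (m.+1).-tuple (hat P)) : pc \in Pch ->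
  (forall i, i <= m -> hcov (Hs pc i) (Hs pc i.+1)) /\ Hs pc m.+1 = HTop.
Proof.
rewrite inE => /andP[/andP[_ /(pathP (HElt z0)) pth] /eqP lst].
split; first by move=> i im; apply: pth; rewrite size_tuple ltnS.
by rewrite /Hs -lst (last_nth (HElt z0)) size_tuple.
Qed.

Lemma Pch_struct pc : pc \in Pch ->
  [/\ forall j, j <= m -> Hs pc j = HElt (pp pc j),
      forall j, j < m -> cov (pp pc j) (pp pc j.+1),
      maxl (pp pc m) & Hs pc m.+1 = HTop].
Proof.
move=> /Pch_path [cv lst].
have hE : forall j, j <= m -> Hs pc j = HElt (pp pc j).
  case=> [|j] jm; first by [].
  have h1 := cv j (ltnW jm); have h2 := cv j.+1 jm.
  rewrite /pp; move: h1 h2; case: (Hs pc j.+1) => [|p|] //.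
  - by rewrite hcovB.
  - by rewrite hcovT.
split=> //.
- move=> j jm; have := cv j (ltnW jm).
  by rewrite (hE j (ltnW jm)) (hE j.+1 jm) hcovEE.
- by have := cv m (leqnn m); rewrite (hE m (leqnn m)) lst hcovET.
Qed.

Lemma pp0 pc : pp pc 0 = z0.
Proof. by []. Qed.

Lemma rank_pp pc : pc \in Pch -> forall j, j <= m -> rank (pp pc j) = j.
Proof.
move=> /Pch_struct [_ cv _ _]; elim=> [|j IH] jm.
  by rewrite pp0 (rank_z0 z0min sp).
by rewrite (rank_cover z0min sp (cv j jm)) IH // ltnW.
Qed.

Lemma Pch_of (pc : (m.+1).-tuple (hat P)) :
  (forall j, j <= m -> Hs pc j = HElt (pp pc j)) ->
  (forall j, j < m -> cov (pp pc j) (pp pc j.+1)) ->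
  maxl (pp pc m) -> Hs pc m.+1 = HTop -> pc \in Pch.
Proof.
move=> hE cv mx lst; rewrite inE /=; apply/andP; split.
  apply/(pathP (HElt z0)) => i; rewrite size_tuple ltnS => im.
  rewrite -/(Hs pc i) -[nth _ pc i]/(Hs pc i.+1).
  case: (ltngtP i m) im => // [lt|eq] _.
    by rewrite (hE i (ltnW lt)) (hE i.+1 lt) hcovEE cv.
  by subst i; rewrite (hE m (leqnn m)) lst hcovET.
by rewrite (last_nth (HElt z0)) size_tuple -/(Hs pc m.+1) lst.
Qed.

Definition Cs (ch : seq RPt) j := nth R0 (R0 :: ch) j.
Definition pP (u : RPt) : P := if u is Some (p, _) then p else z0.
Definition pQ (u : RPt) : seq 'I_t := if u is Some (_, q) then tw q else [::].

Lemma PTch_path (ch : (m.+1).-tuple RPt) : ch \in PTch ->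
  (forall i, i <= m -> Rcov (Cs ch i) (Cs ch i.+1)) /\ Cs ch m.+1 = None.
Proof.
rewrite inE => /andP[/andP[_ /(pathP R0) pth] /eqP lst].
split; first by move=> i im; apply: pth; rewrite size_tuple ltnS.
by rewrite /Cs -lst (last_nth R0) size_tuple.
Qed.

Lemma PTch_of (ch : (m.+1).-tuple RPt) :
  (forall i, i <= m -> Rcov (Cs ch i) (Cs ch i.+1)) -> Cs ch m.+1 = None -> ch \in PTch.
Proof.
move=> cv lst; rewrite inE -andbA; apply/and3P; split.
- by rewrite unfold_in /= leEnat.
- by apply/(pathP R0) => i; rewrite size_tuple ltnS => im; apply: cv.
- by rewrite (last_nth R0) size_tuple -/(Cs ch m.+1) lst.
Qed.

Lemma PTch_struct ch : ch \in PTch ->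
  [/\ forall j, j <= m -> Cs ch j = Some (pP (Cs ch j), mkT n (pQ (Cs ch j))),
      forall j, j < m -> [&& cov (pP (Cs ch j)) (pP (Cs ch j.+1)),
                          prefix (pQ (Cs ch j)) (pQ (Cs ch j.+1)) &
                          size (pQ (Cs ch j.+1)) <= (size (pQ (Cs ch j))).+1],
      maxl (pP (Cs ch m)) & Cs ch m.+1 = None].
Proof.
move=> /PTch_path [cv lst].
have sE : forall j, j <= m -> exists p q, Cs ch j = Some (p, q).
  case=> [|j] jm; first by exists z0, (Tempty t n).
  have := cv j.+1 jm; case: (Cs ch j.+1) => [[p q]|]; first by exists p, q.
  by rewrite RcovN.
have hE : forall j, j <= m -> Cs ch j = Some (pP (Cs ch j), mkT n (pQ (Cs ch j))).
  by move=> j jm; have [p [q ->]] := sE j jm; rewrite /= mkT_tw.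
split=> //.
- move=> j jm; have := cv j (ltnW jm).
  have [p [q E1]] := sE j (ltnW jm); have [p' [q' E2]] := sE j.+1 jm.
  by rewrite E1 E2 (RcovSS z0min sp) /= => /and5P[_ _ -> -> ->].
- have := cv m (leqnn m); have [p [q E1]] := sE m (leqnn m).
  by rewrite E1 lst (RcovSN z0min sp) /= => /andP[].
Qed.


Definition gf (h : {ffun 'I_m -> option 'I_t}) j : option 'I_t :=
  oapp h None (insub j : option 'I_m).
Definition o2s (o : option 'I_t) : seq 'I_t := if o is Some a then [:: a] else [::].
Definition qs h j := pmap id (mkseq (gf h) j).

Lemma gfE h (i : 'I_m) : gf h i = h i.
Proof. by rewrite /gf (insubT (fun j => j < m) (ltn_ord i)) /=; congr (h _); apply: val_inj. Qed.

Lemma gf_ge h j : m <= j -> gf h j = None.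
Proof. by move=> mj; rewrite /gf insubF // ltnNge mj. Qed.

Lemma qsS h j : qs h j.+1 = qs h j ++ o2s (gf h j).
Proof. by rewrite /qs mkseqS -cats1 pmap_cat; case: gf. Qed.

Lemma size_o2s o : size (o2s o) <= 1.
Proof. by case: o. Qed.

Lemma size_qs h j : size (qs h j) <= j.
Proof.
elim: j => [|j IH] //; rewrite qsS size_cat.
by have := size_o2s (gf h j); lia.
Qed.

Definition lift (x : hat P) (q : seq 'I_t) : RPt :=
  if x is HElt p then Some (p, mkT n q) else None.
Definition E pc h j := lift (Hs pc j) (qs h j).

Lemma psi_proof pc h : size (mkseq (fun j => E pc h j.+1) m.+1) == m.+1.
Proof. by rewrite size_mkseq. Qed.
Definition psi pc h : (m.+1).-tuple RPt := Tuple (psi_proof pc h).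

Lemma Cs_psi pc h j : j <= m.+1 -> Cs (psi pc h) j = E pc h j.
Proof.
case: j => [|j] jm.
  by rewrite /Cs /E /= /R0 mkT_nil.
by rewrite /Cs /= nth_mkseq.
Qed.

Lemma m_le_n pc : pc \in Pch -> m <= n.
Proof.
move=> pin; rewrite -Hn -(rank_pp pin (leqnn m)).
exact: rank_plength.
Qed.

Lemma E_some pc h j : pc \in Pch -> j <= m ->
  E pc h j = Some (pp pc j, mkT n (qs h j)).
Proof.
by move=> pin jm; case: (Pch_struct pin) => hE _ _ _; rewrite /E (hE j jm).
Qed.

Lemma E_last pc h : pc \in Pch -> E pc h m.+1 = None.
Proof. by move=> pin; case: (Pch_struct pin) => _ _ _ lst; rewrite /E lst. Qed.

Lemma tw_qs pc h j : pc \in Pch -> j <= m -> tw (mkT n (qs h j)) = qs h j.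
Proof.
move=> pin jm; rewrite tw_mkT //.
by apply: leq_trans (size_qs h j) (leq_trans jm (m_le_n pin)).
Qed.

Lemma psi_in pc h : pc \in Pch -> psi pc h \in PTch.
Proof.
move=> pin; apply: PTch_of; last by rewrite Cs_psi // E_last.
move=> i im; rewrite (Cs_psi pc h (leqW im)) (Cs_psi pc h (im : i.+1 <= m.+1)) (E_some h pin im).
case: (Pch_struct pin) => _ cv mx _.
case: (ltngtP i m) im => // [lt|eq] _.
  rewrite (E_some h pin lt) (RcovSS z0min sp) !(tw_qs h pin) ?(ltnW lt) //.
  rewrite !(rank_pp pin) ?(ltnW lt) // cv // qsS prefix_prefix size_cat.
  by have := size_o2s (gf h i); have := size_qs h i; have := size_qs h i.+1; rewrite qsS size_cat; lia.
subst i; rewrite E_last // (RcovSN z0min sp) (tw_qs h pin) // mx andbT.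
by rewrite (rank_pp pin) // size_qs.
Qed.

Definition proj (u : RPt) : hat P := if u is Some (p, _) then HElt p else HTop.
Definition piP (ch : (m.+1).-tuple RPt) : (m.+1).-tuple (hat P) := [tuple of map proj ch].

Lemma Hs_piP ch j : j <= m.+1 -> Hs (piP ch) j = proj (Cs ch j).
Proof.
case: j => [|j] jm; first by [].
by rewrite /Hs /Cs /= (nth_map R0) // size_tuple.
Qed.

Lemma piP_psi pc h : pc \in Pch -> piP (psi pc h) = pc.
Proof.
move=> pin; apply: val_inj; apply: (@eq_from_nth _ (HElt z0)).
  by rewrite !size_tuple.
move=> i; rewrite size_tuple ltnS => im.
rewrite -[nth _ (piP _) i]/(Hs (piP (psi pc h)) i.+1) Hs_piP // Cs_psi //.
rewrite -[nth _ pc i]/(Hs pc i.+1).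
case: (ltngtP i m) im => // [lt|eq] _.
  by rewrite (E_some h pin lt); case: (Pch_struct pin) => hE _ _ _; rewrite (hE _ lt).
by subst i; rewrite E_last //; case: (Pch_struct pin).
Qed.

Definition hh (ch : (m.+1).-tuple RPt) : {ffun 'I_m -> option 'I_t} :=
  [ffun j : 'I_m => nth None (map Some (pQ (Cs ch j.+1))) (size (pQ (Cs ch j)))].

Lemma nth_o2s (s : seq 'I_t) o : nth None (map Some (s ++ o2s o)) (size s) = o.
Proof.
by rewrite map_cat nth_cat size_map ltnn subnn; case: o.
Qed.

Lemma hh_psi pc h : pc \in Pch -> hh (psi pc h) = h.
Proof.
move=> pin; apply/ffunP => j; rewrite ffunE.
have jm := ltn_ord j.
rewrite (Cs_psi pc h (leqW jm)) (Cs_psi pc h (leqW (ltnW jm))).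
rewrite (E_some h pin jm) (E_some h pin (ltnW jm)) /= (tw_qs h pin jm) (tw_qs h pin (ltnW jm)).
by rewrite qsS nth_o2s gfE.
Qed.

Lemma prefix_ext (s u : seq 'I_t) : prefix s u -> size u <= (size s).+1 ->
  u = s ++ o2s (nth None (map Some u) (size s)).
Proof.
move=> /prefixP [r ->]; rewrite size_cat => sz.
have : size r <= 1 by move: sz; rewrite -addn1 leq_add2l.
case: r {sz} => [|a [|b r]] // _.
- rewrite !cats0 nth_default ?size_map /= ?cats0 //; exact: leqnn.
- by rewrite (_ : [:: a] = o2s (Some a)) // nth_o2s.
Qed.

Lemma qs_hh ch : ch \in PTch -> forall j, j <= m -> qs (hh ch) j = pQ (Cs ch j).
Proof.
move=> cin; case: (PTch_struct cin) => hE cv _ _.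
elim=> [|j IH] jm; first by rewrite /qs /= /R0 /=.
rewrite qsS IH ?(ltnW jm) // -[j]/(nat_of_ord (Ordinal jm)) gfE ffunE /=.
by case/and3P: (cv j jm) => _ pre sz; rewrite -prefix_ext.
Qed.

Lemma piP_in ch : ch \in PTch -> piP ch \in Pch.
Proof.
move=> cin; case: (PTch_struct cin) => hE cv mx lst.
have ppE : forall j, j <= m -> pp (piP ch) j = pP (Cs ch j).
  by move=> j jm; rewrite /pp Hs_piP ?(leqW jm) // (hE j jm).
apply: Pch_of.
- by move=> j jm; rewrite Hs_piP ?(leqW jm) // ppE // (hE j jm).
- by move=> j jm; rewrite !ppE ?(ltnW jm) //; case/and3P: (cv j jm).
- by rewrite ppE.
- by rewrite Hs_piP // lst.
Qed.

Lemma psi_surj ch : ch \in PTch -> psi (piP ch) (hh ch) = ch.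
Proof.
move=> cin; have pin := piP_in cin.
case: (PTch_struct cin) => hE cv mx lst.
apply: val_inj; apply: (@eq_from_nth _ R0); first by rewrite !size_tuple.
move=> i; rewrite size_tuple ltnS => im.
rewrite -[nth _ (psi _ _) i]/(Cs (psi (piP ch) (hh ch)) i.+1) Cs_psi //.
rewrite -[nth _ ch i]/(Cs ch i.+1).
case: (ltngtP i m) im => // [lt|eq] _.
  rewrite (E_some _ pin lt) (qs_hh cin lt); symmetry.
  apply: etrans (hE _ lt) _; congr (Some (_, _)).
  by rewrite /pp (Hs_piP ch (leqW lt)) (hE _ lt).
by subst i; rewrite E_last.
Qed.

Variables (dL : Order.disp_t) (L : porderType dL) (lamP : hat P -> hat P -> L).


Definition wl (pc : seq (hat P)) i := lamP (Hs pc i) (Hs pc i.+1).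
Definition ee pc i := (wl pc i <= wl pc i.+1)%O.
Definition Dset pc (j : 'I_m) : pred (option 'I_t) :=
  [pred o | (ee pc j ==> isSome o) && ((0 < j) && ee pc j.-1 ==> ~~ isSome o)].

Lemma lab_psi pc h i : pc \in Pch -> i <= m ->
  nth (lamP HTop HTop, false) (labseq (Rlab lamP) R0 (psi pc h)) i =
  (wl pc i, (i < m) && isSome (gf h i)).
Proof.
move=> pin im; rewrite /labseq (nth_pairmap R0) ?size_tuple ?ltnS //.
rewrite -[nth R0 (R0 :: _) i]/(Cs (psi pc h) i) -[nth R0 _ i]/(Cs (psi pc h) i.+1).
rewrite (Cs_psi pc h (leqW im)) (Cs_psi pc h (im : i < m.+1)).
rewrite (E_some h pin im) /wl.
case: (Pch_struct pin) => hE _ _ lst.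
case: (ltngtP i m) im => // [lt|eq] _.
  rewrite (E_some h pin lt) /= (hE i (ltnW lt)) (hE i.+1 lt); congr (_, _).
  rewrite /ltT !(tw_qs h pin) ?(ltnW lt) // qsS prefix_prefix /=.
  case: (gf h i) => [a|] /=; last by rewrite cats0 eqxx.
  apply/negP => /eqP /(congr1 size); rewrite size_cat /= addn1 => /eqP.
  by rewrite eqn_leq ltnn andbF.
by subst i; rewrite (E_last h pin) /= (hE m (leqnn m)) lst.
Qed.

Lemma AF_psi pc h : pc \in Pch ->
  ascent_free (labseq (Rlab lamP) R0 (psi pc h)) = (h \in family (Dset pc)).
Proof.
move=> pin.
have sz : (size (labseq (Rlab lamP) R0 (psi pc h))).-1 = m.
  by rewrite /labseq size_pairmap size_tuple.
apply/(AFP _ (lamP HTop HTop, false))/familyP; rewrite sz => H.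
- move=> j; rewrite inE.
  have := (@af_equiv m (ee pc) (fun i => (i < m) && isSome (gf h i))).
  rewrite ltnn => /(_ erefl) [A _].
  have H' : forall i, i < m -> ~~ (ee pc i &&
      ((i < m) && isSome (gf h i) ==> (i.+1 < m) && isSome (gf h i.+1))).
    move=> i im; have := H i im.
    by rewrite (lab_psi h pin (ltnW im)) (lab_psi h pin im).
  by have := A H' j (ltn_ord j); rewrite ltn_ord /= gfE.
- move=> i im; rewrite (lab_psi h pin (ltnW im)) (lab_psi h pin im).
  have := (@af_equiv m (ee pc) (fun i => (i < m) && isSome (gf h i))).
  rewrite ltnn => /(_ erefl) [_ B].
  apply: B i im => j jm; have := H (Ordinal jm); rewrite inE /= jm /=.
  by have -> : gf h j = h (Ordinal jm) by rewrite -gfE.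
Qed.


Lemma nth_lab (pc : (m.+1).-tuple (hat P)) j x1 : j < m.+1 ->
  nth x1 (labseq lamP (HElt z0) pc) j = wl pc j.
Proof. by move=> jm; rewrite /labseq (nth_pairmap (HElt z0)) ?size_tuple. Qed.

Lemma card_AF pc : pc \in Pch ->
  #|[set h | ascent_free (labseq (Rlab lamP) R0 (psi pc h))]| =
  Gw t m (labseq lamP (HElt z0) pc).
Proof.
move=> pin.
have -> : #|[set h | ascent_free (labseq (Rlab lamP) R0 (psi pc h))]| = #|family (Dset pc)|.
  by apply: eq_card => h; rewrite inE AF_psi.
rewrite card_family foldrE big_map big_enum /=.
have -> : \prod_(j < m) #|Dset pc j| = \prod_(j < m) dd t ((0 < j) && ee pc j.-1) (ee pc j).
  by apply: eq_bigr => j _; rewrite -card_D.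
have [x [s [E sz]]] : exists x s, labseq lamP (HElt z0) pc = x :: s /\ size s = m.
  have : size (labseq lamP (HElt z0) pc) = m.+1 by rewrite /labseq size_pairmap size_tuple.
  by case: (labseq _ _ _) => [|x s] // [] ?; exists x, s.
rewrite E -(prodd_Gw _ _ sz) -prodd_big.
have se : size (pairmap (@lep _ L) x s) = m by rewrite size_pairmap.
rewrite se; apply: eq_bigr => j _.
have ej : forall i, i < m -> nth false (pairmap (@lep _ L) x s) i = ee pc i.
  move=> i im; rewrite (nth_pairmap x) ?sz // -E.
  rewrite -[nth x s i]/(nth x (x :: s) i.+1) -E !nth_lab ?ltnS ?(ltnW im) //.
case: j => [[|j] jm] /=; first by rewrite ej.
by rewrite !ej // ltnW.
Qed.

Lemma LHS_eq :
  #|[set ch in PTch | ascent_free (labseq (Rlab lamP) R0 ch)]| =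
  \sum_(pc in Pch) Gw t m (labseq lamP (HElt z0) pc).
Proof.
set D := [set x : (m.+1).-tuple (hat P) * {ffun 'I_m -> option 'I_t} |
           (x.1 \in Pch) && ascent_free (labseq (Rlab lamP) R0 (psi x.1 x.2))].
pose f := fun x : (m.+1).-tuple (hat P) * {ffun 'I_m -> option 'I_t} => psi x.1 x.2.
have -> : [set ch in PTch | ascent_free (labseq (Rlab lamP) R0 ch)] =
          [set f x | x in D].
  apply/setP => ch; rewrite inE; apply/andP/imsetP.
  - case=> cin af; exists (piP ch, hh ch); last by rewrite /f /= psi_surj.
    rewrite inE; apply/andP; split; first exact: piP_in.
    by change (ascent_free (labseq (Rlab lamP) R0 (psi (piP ch) (hh ch)))); rewrite psi_surj.
  - case=> -[pc h] Hx ->; move: Hx; rewrite [_ \in D]inE => /andP[pin af].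
    by split=> //; exact: psi_in.
rewrite card_in_imset; last first.
  move=> [pc h] [pc' h'] Hx Hy E.
  have p1 : pc \in Pch by move: Hx; rewrite [_ \in D]inE => /andP[].
  have p2 : pc' \in Pch by move: Hy; rewrite [_ \in D]inE => /andP[].
  move: E; rewrite /f /= => E.
  have E1 : pc = pc' by rewrite -(piP_psi h p1) -(piP_psi h' p2) E.
  subst pc'; congr (_, _).
  by rewrite -(hh_psi h p1) -(hh_psi h' p2) E.
rewrite -sum1_card.
have -> : \sum_(x in D) 1 = \sum_(pc : (m.+1).-tuple (hat P))
    \sum_(h : {ffun 'I_m -> option 'I_t}) (if (pc, h) \in D then 1 else 0).
  by rewrite pair_bigA big_mkcond; apply: eq_bigr => -[pc h] _.
rewrite [RHS]big_mkcond; apply: eq_bigr => pc _.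
case: (boolP (pc \in Pch)) => pin.
  rewrite -card_AF // -sum1_card [RHS]big_mkcond; apply: eq_bigr => h _.
  by rewrite [_ \in D]inE [h \in _]inE pin.
by apply: big1 => h _; rewrite [_ \in D]inE (negbTE pin).
Qed.

Lemma RHS_eq :
  let c (w : seq L) : nat := #|[set ch in Pch | labseq lamP (HElt z0) ch == w]| in
  let W := undup [seq labseq lamP (HElt z0) (tval ch) | ch : (m.+1).-tuple (hat P) <- enum Pch] in
  (\sum_(w <- W | NDA m.+1 w && ~~ last_asc w) c w * t ^ asc w * (1 + t) ^ (m - 2 * asc w)
   + \sum_(w <- W | NDA m.+1 w && last_asc w) c w * t ^ asc w * (1 + t) ^ (m.+1 - 2 * asc w))
  = \sum_(pc in Pch) Gw t m (labseq lamP (HElt z0) pc).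
Proof.
move=> c W.
rewrite big_mkcond [X in _ + X]big_mkcond -big_split /=.
transitivity (\sum_(w <- W) c w * Gw t m w).
  apply: eq_bigr => w _; rewrite /Gw.
  by case: (NDA _ w); case: (last_asc w) => /=; rewrite ?muln0 ?add0n ?addn0 ?mulnA.
have cE : forall w, c w * Gw t m w = \sum_(pc in Pch)
    (if labseq lamP (HElt z0) pc == w then Gw t m (labseq lamP (HElt z0) pc) else 0).
  move=> w; rewrite /c -sum_nat_const big_mkcond [RHS]big_mkcond.
  apply: eq_bigr => pc _; rewrite in_set.
  by case: (pc \in Pch) => //=; case: eqP => // ->.
rewrite (eq_bigr _ (fun w _ => cE w)) exchange_big /=.
apply: eq_bigr => pc pin.
have inW : labseq lamP (HElt z0) pc \in W.
  by rewrite mem_undup; apply: (map_f (fun ch : (m.+1).-tuple (hat P) => labseq lamP (HElt z0) ch)); rewrite mem_enum.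
rewrite (bigD1_seq (labseq lamP (HElt z0) pc)) ?undup_uniq //= eqxx big1 ?addn0 //.
by move=> w; rewrite eq_sym => /negbTE ->.
Qed.

End Chains.


Unset Implicit Arguments.
Local Open Scope order_scope.

Theorem theorem3p6 (d : Order.disp_t) (P : finPOrderType d) (z0 : P)
    (n t : nat) (dL : Order.disp_t) (L : porderType dL)
    (lamP : hat P -> hat P -> L) (m : nat) :
  (forall x : P, z0 <= x) ->
  semipure P ->
  plength P = n ->
  (0 < t)%N ->
  EL_labeling (@predT (hat P)) (@hle d P) lamP ->
  let R0 : RP P t n := Some (z0, Tempty t n) in
  let PTchains := mchains (@Rcarrier d P t n) (@Rle d P t n) R0 None m.+1 in
  let Pchains := mchains (@predT (hat P)) (@hle d P) (HElt z0) HTop m.+1 in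
  let c (w : seq L) : nat :=
    #|[set ch in Pchains | labseq lamP (HElt z0) ch == w]| in
  let W : seq (seq L) :=
    undup [seq labseq lamP (HElt z0) (tval ch) | ch : (m.+1).-tuple (hat P) <- enum Pchains] in
  #|[set ch in PTchains | ascent_free (labseq (@Rlab d P t n dL L lamP) R0 ch)]| =
  (\sum_(w <- W | NDA m.+1 w && ~~ last_asc w)
      c w * t ^ asc w * (1 + t) ^ (m - 2 * asc w)
   + \sum_(w <- W | NDA m.+1 w && last_asc w)
      c w * t ^ asc w * (1 + t) ^ (m.+1 - 2 * asc w))%N.
Proof.
move=> z0min sp Hn _ _.
have HL := @LHS_eq d P z0 z0min sp t n m Hn dL L lamP.
have HR := @RHS_eq d P z0 t m dL L lamP.
move=> R1 PTchains Pchains c W.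
cbv zeta in HR.
rewrite /W /c /Pchains /PTchains /R1.
rewrite -[mchains predT _ (HElt z0) HTop m.+1]/(Pch z0 m).
rewrite -[Some (z0, Tempty t n)]/(R0 z0 t n).
rewrite -[mchains (Rcarrier (n:=n)) _ _ None m.+1]/(PTch z0 t n m).
by rewrite HL HR.
Qed.
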